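(* In the setting described in the context, assume $x_h^2\beta>3$ and $n>\max\{\frac1{2\alpha x_h^2\beta}-\frac1{x_h^2\beta},\ \frac\alpha{x_h^2\beta},\ \frac\alpha{x_h^2\beta}(e^{\frac2{x_h^2\beta}}-2)+\frac1{2x_h^2\beta}\}$, and let $\dot k=\frac1{2n}\log_\lambda\Big(\frac1{1+\frac1{\alpha\eta}(1-\lambda^2)}\Big)-1$. Then for every $r\in\{1,\dots,n\}$, $$\frac{(\mu_{\lceil\dot k\rceil n+n}-\hat\mu^r_{\lceil\dot k\rceil n+n})^2}{(\hat\sigma^r_{\lceil\dot k\rceil n+n})^2}\ge e^{-\frac2{x_h^2\beta}}\frac\alpha{v_1}\Big(\frac3{32x_h^2\beta}\Big)^2\Big(\frac cn\Big)^2,\qquad v_1=\max\{6,1+2e^{\frac1{x_h^2\beta}}\}.$$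
   Context: Fix $\alpha,\beta,x_h,c>0$ and an integer $n\ge2$. Model: $y=\theta x+\xi$, $\xi\sim\mathcal N(0,\beta^{-1})$, prior $\theta\sim\mathcal N(0,\alpha^{-1})$. Databases: $D_1$ consists of $n$ copies of $(x_h,cx_h)$; $D_2$ consists of $n-1$ copies of $(x_h,cx_h)$ and one copy of $(x_h/2,cx_h/2)$. Cyclic SGLD with batch size 1 and step size $\eta=\frac2{(\alpha+nx_h^2\beta)^2}$: $\theta_0\sim\mathcal N(0,\alpha^{-1})$, $\theta_{j+1}=\theta_j+\frac\eta2[-\alpha\theta_j+n\beta(y_{i_j}-\theta_jx_{i_j})x_{i_j}]+\sqrt\eta\,\xi_j$ with $\xi_j\sim\mathcal N(0,1)$ i.i.d. independent of $\theta_0$; the database is shuffled once uniformly and its samples are then used cyclically. On $D_1$ the $j$-th iterate is $\mathcal N(\mu_j,\sigma_j^2)$. On $D_2$ let $r\in\{1,\dots,n\}$ be the position within each epoch at which $(x_h/2,cx_h/2)$ is used; conditionally on $r$ the $j$-th iterate is $\hat\theta^r_j\sim\mathcal N(\hat\mu^r_j,(\hat\sigma^r_j)^2)$. Set $\lambda=1-\frac\eta2(\alpha+nx_h^2\beta)$, $\hat\lambda=1-\frac\eta2(\alpha+n\frac{x_h^2}4\beta)$. *)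

(* Defs.v *)
From HB Require Import structures.
From mathcomp Require Import all_boot all_order all_algebra.
From mathcomp Require Import boolp classical_sets reals sequences exp.
Set Implicit Arguments. Unset Strict Implicit. Unset Printing Implicit Defensive.
Import Order.TTheory GRing.Theory Num.Theory.
Local Open Scope ring_scope.

Definition sgld_eta {R : realType} (alpha beta xh : R) (n : nat) : R :=
  2 / (alpha + n%:R * xh ^+ 2 * beta) ^+ 2.

(* Mean and variance of the j-th (Gaussian) SGLD iterate when step j uses the
   sample data j = (x_{i_j}, y_{i_j}).  From
     theta_{j+1} = theta_j + eta/2 [-alpha theta_j + n beta (y - theta_j x) x]
                   + sqrt eta xi_j,
   with theta_0 ~ N(0, 1/alpha) and xi_j ~ N(0,1) independent of theta_j:
     mu_{j+1}      = mu_j + eta/2 [-alpha mu_j + n beta (y - mu_j x) x]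
     sigma^2_{j+1} = (1 - eta/2 (alpha + n beta x^2))^2 sigma^2_j + eta. *)
Fixpoint sgld_mv {R : realType} (alpha beta eta : R) (n : nat)
    (data : nat -> R * R) (j : nat) : R * R :=
  match j with
  | 0 => (0, alpha^-1)
  | j'.+1 =>
      let mv := sgld_mv alpha beta eta n data j' in
      let x := (data j').1 in
      let y := (data j').2 in
      (mv.1 + eta / 2 * (- alpha * mv.1 + n%:R * beta * (y - mv.1 * x) * x),
       (1 - eta / 2 * (alpha + n%:R * beta * x ^+ 2)) ^+ 2 * mv.2 + eta)
  end.

(* D1: every step uses (x_h, c x_h) (shuffling is irrelevant). *)
Definition data_D1 {R : realType} (xh c : R) : nat -> R * R :=
  fun _ => (xh, c * xh).

(* D2, conditionally on r in {1..n}: step j (0-based) is at position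
   (j mod n) + 1 of its epoch; it uses (x_h/2, c x_h/2) iff that position is r. *)
Definition data_D2 {R : realType} (xh c : R) (n r : nat) : nat -> R * R :=
  fun j => if (j %% n == r.-1)%N then (xh / 2, c * xh / 2) else (xh, c * xh).

Definition mu1 {R : realType} (alpha beta xh c : R) (n j : nat) : R :=
  (sgld_mv alpha beta (sgld_eta alpha beta xh n) n (data_D1 xh c) j).1.
Definition sigma1_sq {R : realType} (alpha beta xh c : R) (n j : nat) : R :=
  (sgld_mv alpha beta (sgld_eta alpha beta xh n) n (data_D1 xh c) j).2.
Definition mu2 {R : realType} (alpha beta xh c : R) (n r j : nat) : R :=
  (sgld_mv alpha beta (sgld_eta alpha beta xh n) n (data_D2 xh c n r) j).1.
Definition sigma2_sq {R : realType} (alpha beta xh c : R) (n r j : nat) : R :=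
  (sgld_mv alpha beta (sgld_eta alpha beta xh n) n (data_D2 xh c n r) j).2.

Definition sgld_lambda {R : realType} (alpha beta xh : R) (n : nat) : R :=
  1 - sgld_eta alpha beta xh n / 2 * (alpha + n%:R * xh ^+ 2 * beta).

Definition logb {R : realType} (b y : R) : R := ln y / ln b.

Definition kdot {R : realType} (alpha beta xh : R) (n : nat) : R :=
  let lam := sgld_lambda alpha beta xh n in
  let eta := sgld_eta alpha beta xh n in
  (2 * n%:R)^-1 * logb lam ((1 + (alpha * eta)^-1 * (1 - lam ^+ 2))^-1) - 1.

(* Main.v *)
Require Import Defs.
From HB Require Import structures.
From mathcomp Require Import all_boot all_order all_algebra.
From mathcomp Require Import boolp classical_sets reals sequences exp.
From mathcomp Require Import ring lra.
Import Order.TTheory GRing.Theory Num.Theory.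
Local Open Scope ring_scope.
Lemma numlb (R : realType) (a c nn s p L : R) :
  0 < a -> 0 < nn -> 0 < s -> p = nn * s -> 0 < p -> p <= L -> 6 < L ->
  9 * a * c^+2 * (p / L)^+6 / (16 * nn^+2 * s^+2) <=
  a * (p * c / L) ^+ 2 * (3 * p / (4 * L * (L - 1)))^+2.
Proof.
move=> ha hn hs hp p0 hpL hL.
have L0 : 0 < L by lra.
have L2 : 0 < L^+2 by apply: exprn_gt0.
have hHlb : 3 * p / (4 * L ^+ 2) <= 3 * p / (4 * L * (L - 1)).
  rewrite -subr_ge0.
  have -> : 3 * p / (4 * L * (L - 1)) - 3 * p / (4 * L ^+ 2) = 3 * p / (4 * L^+2 * (L - 1)).
    by field; apply/andP; split; apply/eqP; lra.
  apply: divr_ge0; first lra.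
  apply: mulr_ge0; last lra.
  by apply: mulr_ge0; [lra|exact: ltW].
have h0 : 0 <= 3 * p / (4 * L ^+ 2) by apply: divr_ge0; [lra| rewrite pmulr_rge0 //; exact: ltW].
apply: (@le_trans _ _ (a * (p * c / L) ^+ 2 * (3 * p / (4 * L ^+ 2))^+2)).
  rewrite le_eqVlt; apply/orP; left; apply/eqP.
  rewrite hp; field; apply/and3P; split; apply/eqP; lra.
apply: ler_wpM2l; first by apply: mulr_ge0; [lra|apply: sqr_ge0].
by rewrite !expr2; apply: ler_pM.
Qed.
Lemma Hsq_le (R : realType) (p L : R) : 6 < L -> 0 <= p -> p <= L ->
  (1 + 3 * p / (4 * L * (L - 1)))^+2 <= 4/3.
Proof.
move=> hL p0 pL.
have hH0 : 0 <= 3 * p / (4 * L * (L - 1)).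
  by apply: divr_ge0; [lra| apply: mulr_ge0; [apply: mulr_ge0|]; lra].
have hH1 : 3 * p / (4 * L * (L - 1)) <= 3/20.
  rewrite ler_pdivrMr; last by apply: mulr_gt0; [apply: mulr_gt0|]; lra.
  have : 0 <= (L - 6) * L by apply: mulr_ge0; lra.
  lra.
move: hH0 hH1; move: (3 * p / _) => H hH0 hH1.
have : 0 <= H * (3/20 - H) by apply: mulr_ge0; lra.
rewrite expr2; lra.
Qed.

Lemma T_le1 (R : realType) (a p s nn L lh w : R) :
  0 < a -> 3 < s -> p = nn * s -> 0 < nn -> a <= p / 2 -> L = a + p -> 5/6 <= lh ->
  1 - 2 * nn / L <= w ->
  (2*a+2*L-1)/((a+p/4)*(1+lh)*w) <= 144/11.
Proof.
move=> ha hs hp hn hap hL hlh hw.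
have p0 : 0 < p by rewrite hp; apply: mulr_gt0; lra.
have hw0 : 1/3 <= w.
  apply: le_trans hw.
  suff : 2 * nn / L <= 2/3 by lra.
  rewrite ler_pdivrMr; last lra.
  rewrite hL hp. nra.
have hZ0 : 0 < (a + p / 4) * (1 + lh) * w.
  apply: mulr_gt0; [apply: mulr_gt0|]; lra.
rewrite ler_pdivrMr //.
have : (a + p / 4) * (11/6) * (1/3) <= (a + p / 4) * (1 + lh) * w.
  apply: ler_pM; [|lra|apply: ler_pM|]; lra.
rewrite hL; lra.
Qed.

Lemma T_le2 (R : realType) (a p s nn L lh w : R) :
  0 < a -> 3 < s -> p = nn * s -> 0 < nn -> p / 2 <= a -> L = a + p -> 5/6 <= lh ->
  1 - 2 * nn / L <= w ->
  (2*a+2*L-1)/((a+p/4)*(1+lh)*w) <= 96 * s / (11 * (3 * s - 4)).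
Proof.
move=> ha hs hp hn hap hL hlh hw.
have p0 : 0 < p by rewrite hp; apply: mulr_gt0; lra.
have L0 : 0 < L by lra.
have hw2 : (3 * s - 4) / (3 * s) <= w.
  apply: le_trans hw.
  rewrite ler_pdivrMr; last lra.
  have -> : (1 - 2 * nn / L) * (3 * s) = 3 * s - 6 * p / L.
    by rewrite hp; field; apply/eqP; lra.
  suff : 6 * p / L <= 4 by lra.
  rewrite ler_pdivrMr //. rewrite hL; lra.
have hw20 : 0 < (3 * s - 4) / (3 * s) by apply: divr_gt0; lra.
have hZ0 : 0 < (a + p / 4) * (1 + lh) * w.
  apply: mulr_gt0; [apply: mulr_gt0|]; lra.
rewrite ler_pdivrMr //.
have hZ : (a + p / 4) * (11/6) * ((3 * s - 4) / (3 * s)) <= (a + p / 4) * (1 + lh) * w.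
  apply: ler_pM; [|lra|apply: ler_pM|]; lra.
apply: (@le_trans _ _ (96 * s / (11 * (3 * s - 4)) * ((a + p / 4) * (11/6) * ((3 * s - 4) / (3 * s))))); last first.
  apply: ler_wpM2l => //; apply: divr_ge0; lra.
have -> : 96 * s / (11 * (3 * s - 4)) * ((a + p / 4) * (11/6) * ((3 * s - 4) / (3 * s))) = 16/3 * (a + p/4).
  by field; apply/andP; split; apply/eqP; lra.
rewrite hL; lra.
Qed.

Lemma B_le2 (R : realType) (s X : R) : 3 < s -> 1/2 <= X ->
  4/3 + 96 * s / (11 * (3 * s - 4)) <= 384 * (s + 2) * X^+6 / s.
Proof.
move=> hs hX.
have hX6 : (1/2)^+6 <= X^+6 by apply: lerXn2r => //; rewrite nnegrE; lra.
have e1 : 384 * (s + 2) * X^+6 / s = ((s + 2) / s) * (384 * X^+6).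
  by field; apply/eqP; lra.
have c6 : (1/2 : R)^+6 = 1/64 by rewrite !exprS expr0; lra.
have h6 : 6 <= 384 * X^+6 by lra.
have hs2 : 0 <= (s + 2) / s by apply: divr_ge0; lra.
have e2 : 6 * (s + 2) / s - 4/3 = (14 * s + 36) / (3 * s).
  by field; apply/eqP; lra.
have hA : 96 * s / (11 * (3 * s - 4)) <= (14 * s + 36) / (3 * s).
  rewrite ler_pdivrMr; last lra.
  rewrite mulrAC ler_pdivlMr; last lra.
  have : 3 * s <= s * s by nra.
  nra.
have : 6 * ((s + 2) / s) <= ((s + 2) / s) * (384 * X^+6).
  by rewrite mulrC; apply: ler_wpM2l.
rewrite mulrA in e2 *. lra.
Qed.

Lemma B_le1 (R : realType) (s X : R) : 3 < s -> 2/3 <= X ->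
  4/3 + 144/11 <= 384 * (s + 2) * X^+6 / s.
Proof.
move=> hs hX.
have hX6 : (2/3)^+6 <= X^+6 by apply: lerXn2r => //; rewrite nnegrE; lra.
have c6 : (2/3 : R)^+6 = 64/729 by rewrite !exprS expr0; lra.
rewrite ler_pdivlMr; last lra.
have : 0 <= X^+6 by apply: exprn_ge0; lra.
nra.
Qed.

Lemma den_bound (R : realType) (a s nn p L lh w : R) :
  0 < a -> 3 < s -> 2 <= nn -> p = nn * s -> a < p -> L = a + p -> 5/6 <= lh ->
  1 - 2 * nn / L <= w ->
  (1 + 3 * p / (4 * L * (L - 1)))^+2 + (2*a+2*L-1)/((a+p/4)*(1+lh)*w)
    <= 384 * (s + 2) * (p / L)^+6 / s.
Proof.
move=> ha hs hn hp hap hL hlh hw.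
have p6 : 6 < p by rewrite hp; nra.
have hL6 : 6 < L by lra.
have hH : (1 + 3 * p / (4 * L * (L - 1)))^+2 <= 4/3 by apply: Hsq_le; lra.
have L0 : 0 < L by lra.
have hn0 : 0 < nn by lra.
have [hc|hc] := lerP a (p / 2).
- have hX : 2/3 <= p / L by rewrite ler_pdivlMr // hL; lra.
  have := @T_le1 R a p s nn L lh w ha hs hp hn0 hc hL hlh hw.
  have := @B_le1 R s (p / L) hs hX.
  lra.
- have hX : 1/2 <= p / L by rewrite ler_pdivlMr // hL; lra.
  have := @T_le2 R a p s nn L lh w ha hs hp hn0 (ltW hc) hL hlh hw.
  have := @B_le2 R s (p / L) hs hX.
  lra.
Qed.

Lemma rhs_bound (R : realType) (a s nn c : R) :
  0 < a -> 3 < s -> 0 < nn -> 0 < c ->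
  expR (- (2 / s)) * (a / Num.max 6 (1 + 2 * expR s^-1)) * (3 / (32 * s)) ^+ 2 * (c / nn) ^+ 2
  <= 9 * a * c^+2 / (6144 * nn^+2 * s * (s + 2)).
Proof.
move=> ha hs hn hc.
have hE : expR (- (2 / s)) <= s / (s + 2).
  rewrite ler_pdivlMr; last lra.
  have h1 : 1 + 2 / s <= expR (2 / s) by apply: expR_ge1Dx.
  have h2 : expR (- (2 / s)) * expR (2 / s) = 1 by rewrite -expRD addNr expR0.
  have h3 : expR (- (2 / s)) * (1 + 2 / s) <= 1.
    rewrite -[X in _ <= X]h2; apply: ler_wpM2l => //; apply: expR_ge0.
  have -> : expR (- (2 / s)) * (s + 2) = (expR (- (2 / s)) * (1 + 2 / s)) * s.
    by field; apply/eqP; lra.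
  have : 0 <= (1 - expR (- (2 / s)) * (1 + 2 / s)) * s by apply: mulr_ge0; lra.
  lra.
have hM : a / Num.max 6 (1 + 2 * expR s^-1) <= a / 6.
  apply: ler_wpM2l; first lra.
  have hM6 : 6 <= Num.max 6 (1 + 2 * expR s^-1) by rewrite le_max lexx.
  rewrite lef_pV2 // posrE; lra.
apply: (@le_trans _ _ (s / (s + 2) * (a / 6) * (3 / (32 * s)) ^+ 2 * (c / nn) ^+ 2)).
  apply: ler_wpM2r; first exact: sqr_ge0.
  apply: ler_wpM2r; first exact: sqr_ge0.
  apply: ler_pM => //; first exact: expR_ge0.
  by apply: divr_ge0; [lra| apply: (@le_trans _ _ 6); [lra| by rewrite le_max lexx]].
rewrite le_eqVlt; apply/orP; left; apply/eqP.
field; apply/and3P; split; apply/eqP; lra.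
Qed.

Lemma final_ineq (R : realType) (a s nn c p L lh w : R) :
  0 < a -> 3 < s -> 2 <= nn -> 0 < c -> p = nn * s -> a < p -> L = a + p ->
  5/6 <= lh -> 1 - 2 * nn / L <= w -> 0 < w ->
  expR (- (2 / s)) * (a / Num.max 6 (1 + 2 * expR s^-1)) * (3 / (32 * s)) ^+ 2 * (c / nn) ^+ 2 <=
  a * (p * c / L) ^+ 2 * (3 * p / (4 * L * (L - 1)))^+2
   / ((1 + 3 * p / (4 * L * (L - 1)))^+2 + (2*a+2*L-1)/((a+p/4)*(1+lh)*w)).
Proof.
move=> ha hs hn hc hp hap hL hlh hw w0.
have p6 : 6 < p by rewrite hp; nra.
have hL6 : 6 < L by lra.
have hn0 : 0 < nn by lra.
have s0 : 0 < s by lra.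
have hDb := @den_bound R a s nn p L lh w ha hs hn hp hap hL hlh hw.
have hnl : 9 * a * c^+2 * (p / L)^+6 / (16 * nn^+2 * s^+2) <=
    a * (p * c / L) ^+ 2 * (3 * p / (4 * L * (L - 1)))^+2.
  apply: numlb => //; lra.
move: hDb hnl.
set D := (1 + _)^+2 + _.
set num := a * _ * _.
move=> hDb hnl.
have hH0 : 0 <= 3 * p / (4 * L * (L - 1)).
  by apply: divr_ge0; [lra| apply: mulr_ge0; [apply: mulr_ge0|]; lra].
have hT0 : 0 <= (2*a+2*L-1)/((a+p/4)*(1+lh)*w).
  apply: divr_ge0; first lra.
  apply: mulr_ge0; [apply: mulr_ge0|]; lra.
have D0 : 0 < D.
  have : 0 < (1 + 3 * p / (4 * L * (L - 1)))^+2 by apply: exprn_gt0; lra.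
  rewrite /D; lra.
have X0 : 0 < p / L by apply: divr_gt0; lra.
have X60 : 0 < (p / L)^+6 by apply: exprn_gt0.
have Db0 : 0 < 384 * (s + 2) * (p / L)^+6 / s.
  by apply: divr_gt0 => //; apply: mulr_gt0 => //; lra.
apply: le_trans (@rhs_bound R a s nn c ha hs hn0 hc) _.
have -> : 9 * a * c^+2 / (6144 * nn^+2 * s * (s + 2)) =
   (9 * a * c^+2 * (p / L)^+6 / (16 * nn^+2 * s^+2)) / (384 * (s + 2) * (p / L)^+6 / s).
  by field; do ! (apply/andP; split); apply/eqP; try lra.
have num0 : 0 <= num by rewrite /num; apply: mulr_ge0; [apply: mulr_ge0; [lra|exact: sqr_ge0]|exact: sqr_ge0].
apply: (@le_trans _ _ (num / (384 * (s + 2) * (p / L)^+6 / s))).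
  by apply: ler_wpM2r => //; rewrite invr_ge0; exact: ltW.
apply: ler_wpM2l => //.
by rewrite lef_pV2.
Qed.
Lemma mean_step (R : realType) (a b eta nn c xh x y m L : R) :
  L = a + nn * xh^+2 * b -> L != 0 -> y = c * x ->
  nn * xh^+2 * b * c / L - (m + eta / 2 * (- a * m + nn * b * (y - m * x) * x)) =
  (1 - eta / 2 * (a + nn * b * x ^+ 2)) * (nn * xh^+2 * b * c / L - m)
  + eta / 2 * (a * c / L) * (nn * b * (xh^+2 - x^+2)).
Proof. move=> hL L0 ->; rewrite hL in L0 *; by field. Qed.

Lemma prod_lb (R : realType) (l : nat -> R) (lam : R) j :
  0 <= lam -> (forall i, lam <= l i) -> lam ^+ j <= \prod_(i < j) l i.
Proof.
move=> h0 hl; elim: j => [|j IH]; first by rewrite big_ord0 expr0.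
rewrite big_ord_recr /= exprSr; apply: ler_pM => //; exact: exprn_ge0.
Qed.

Lemma prod_lb2 (R : realType) (l : nat -> R) (lam lamh : R) (r j : nat) :
  0 <= lam -> (forall i, lam <= l i) -> l r = lamh -> (r < j)%N ->
  lam ^+ j * lamh <= lam * \prod_(i < j) l i.
Proof.
move=> h0 hl hr; elim: j => [|j IH] //.
rewrite ltnS leq_eqVlt => /orP [/eqP <-|hrj].
  rewrite big_ord_recr /= hr exprSr.
  have -> : lam * (\prod_(i < r) l i * lamh) = \prod_(i < r) l i * (lam * lamh) by ring.
  rewrite -mulrA.
  apply: ler_wpM2r; first by apply: mulr_ge0 => //; rewrite -hr; apply: le_trans (hl r).
  by apply: prod_lb.
rewrite big_ord_recr /= exprSr mulrAC mulrA.
apply: ler_pM => //.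
  by apply: mulr_ge0; [exact: exprn_ge0|rewrite -hr; apply: le_trans (hl r)].
exact: IH.
Qed.

Lemma mean_lb (R : realType) (a b eta c xh L : R) (n : nat) (data : nat -> R * R) j :
  L = a + n%:R * xh^+2 * b -> 0 < L -> 0 <= a -> 0 <= eta -> 0 <= c -> 0 <= n%:R * b ->
  (forall i, (data i).2 = c * (data i).1) -> (forall i, (data i).1^+2 <= xh^+2) ->
  (forall i, 0 <= 1 - eta / 2 * (a + n%:R * b * (data i).1 ^+ 2)) ->
  n%:R * xh^+2 * b * c / L * \prod_(i < j) (1 - eta / 2 * (a + n%:R * b * (data i).1 ^+ 2))
   <= n%:R * xh^+2 * b * c / L - (sgld_mv a b eta n data j).1.
Proof.
move=> hL L0 ha he hc hnb hy hx hl.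
elim: j => [|j IH]; first by rewrite big_ord0 mulr1 /= subr0.
rewrite big_ord_recr /=.
rewrite (@mean_step R a b eta n%:R c xh (data j).1 (data j).2 _ L hL (lt0r_neq0 L0) (hy j)).
set l := 1 - _.
set mus := n%:R * xh ^+ 2 * b * c / L.
have hex : 0 <= eta / 2 * (a * c / L) * (n%:R * b * (xh ^+ 2 - (data j).1 ^+ 2)).
  apply: mulr_ge0; first apply: mulr_ge0.
  - by apply: divr_ge0.
  - by apply: divr_ge0 => //; [apply: mulr_ge0|exact: ltW].
  - by apply: mulr_ge0 => //; rewrite subr_ge0.
have : mus * \prod_(i < j) (1 - eta / 2 * (a + n%:R * b * (data i).1 ^+ 2)) * l <= l * (mus - (sgld_mv a b eta n data j).1).
  by rewrite mulrC; apply: ler_wpM2l => //; apply: hl.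
rewrite mulrA. lra.
Qed.

Lemma mean_D1 (R : realType) (a b eta c xh L : R) (n : nat) j :
  L = a + n%:R * xh^+2 * b -> L != 0 ->
  n%:R * xh^+2 * b * c / L - (sgld_mv a b eta n (data_D1 xh c) j).1
  = n%:R * xh^+2 * b * c / L * (1 - eta / 2 * (a + n%:R * b * xh ^+ 2)) ^+ j.
Proof.
move=> hL L0.
elim: j => [|j IH]; first by rewrite expr0 mulr1 /= subr0.
rewrite /=.
rewrite (@mean_step R a b eta n%:R c xh xh (c * xh) _ L hL L0 erefl).
by rewrite IH subrr !mulr0 addr0 (exprSr _ j) [_ ^+ j * _]mulrC mulrCA.
Qed.

Lemma var_ub (R : realType) (a b eta lamh : R) (n : nat) (data : nat -> R * R) j :
  0 < a -> 0 <= eta -> 0 <= lamh < 1 ->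
  (forall i, 0 <= 1 - eta / 2 * (a + n%:R * b * (data i).1 ^+ 2) <= lamh) ->
  (sgld_mv a b eta n data j).2 <=
   (\prod_(i < j) (1 - eta / 2 * (a + n%:R * b * (data i).1 ^+ 2)))^+2 / a + eta / (1 - lamh^+2).
Proof.
move=> ha he /andP [hl0 hl1] hl.
have hd : 0 < 1 - lamh^+2 by rewrite subr_gt0 expr2; nra.
have S0 : 0 <= eta / (1 - lamh ^+ 2) by apply: divr_ge0 => //; exact: ltW.
elim: j => [|j IH]; first by rewrite big_ord0 expr1n mul1r /= lerDl.
rewrite big_ord_recr /=.
set l := 1 - _.
have /andP [l0 l1] := hl j.
have hl2 : l^+2 <= lamh^+2 by rewrite !expr2; apply: ler_pM.
have e1 : lamh^+2 * (eta / (1 - lamh ^+ 2)) + eta = eta / (1 - lamh ^+ 2).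
  by field; rewrite lt0r_neq0.
have h1 : l^+2 * (sgld_mv a b eta n data j).2 <= l^+2 * ((\prod_(i < j) (1 - eta / 2 * (a + n%:R * b * (data i).1 ^+ 2)))^+2 / a + eta / (1 - lamh^+2)).
  by apply: ler_wpM2l => //; exact: sqr_ge0.
have h2 : l^+2 * (eta / (1 - lamh ^+ 2)) <= lamh^+2 * (eta / (1 - lamh ^+ 2)).
  by apply: ler_wpM2r.
move: h1 h2 e1.
set P := \prod_(i < j) _.
set V := (sgld_mv a b eta n data j).2.
set S := eta / _.
move=> h1 h2 e1.
have -> : (P * l) ^+ 2 / a + S = l^+2 * (P^+2 / a + S) + (S - l^+2 * S) by ring.
lra.
Qed.

Lemma var_pos (R : realType) (a b eta : R) (n : nat) (data : nat -> R * R) j :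
  0 < a -> 0 < eta -> 0 < (sgld_mv a b eta n data j).2.
Proof.
move=> ha he; elim: j => [|j IH] /=; first by rewrite invr_gt0.
apply: ltr_wpDl => //; apply: mulr_ge0; [exact: sqr_ge0| exact: ltW].
Qed.

Lemma mono_ratio (R : realType) (a S0 u P0 P : R) :
  0 < a -> 0 <= S0 -> 0 < u -> u <= P0 -> P0 <= P ->
  (P0 - u)^+2 / (P0^+2 / a + S0) <= (P - u)^+2 / (P^+2 / a + S0).
Proof.
move=> ha hS hu h1 h2.
have ia : 0 < a^-1 by rewrite invr_gt0.
have d0 : 0 < P0^+2 / a + S0.
  by apply: ltr_wpDr => //; apply: divr_gt0 => //; apply: exprn_gt0; lra.
have d1 : 0 < P^+2 / a + S0.
  by apply: ltr_wpDr => //; apply: divr_gt0 => //; apply: exprn_gt0; lra.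
rewrite ler_pdivrMr // mulrAC ler_pdivlMr //.
have q1 : (P0 - u) * P <= (P - u) * P0 by nra.
have q10 : 0 <= (P0 - u) * P by apply: mulr_ge0; lra.
have q2 : ((P0 - u) * P)^+2 <= ((P - u) * P0)^+2.
  by rewrite !expr2; apply: ler_pM.
have q3 : (P0 - u)^+2 <= (P - u)^+2 by rewrite !expr2; apply: ler_pM; lra.
have q2' := ler_wpM2l (ltW ia) q2.
have q3' := ler_wpM2l hS q3.
move: q2' q3'; rewrite /(_ / _) => q2' q3'.
have -> : (P0 - u) ^+ 2 * (P ^+ 2 * a^-1 + S0) = a^-1 * ((P0 - u) * P) ^+ 2 + S0 * (P0 - u) ^+ 2 by ring.
have -> : (P - u) ^+ 2 * (P0 ^+ 2 * a^-1 + S0) = a^-1 * ((P - u) * P0) ^+ 2 + S0 * (P - u) ^+ 2 by ring.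
lra.
Qed.

Lemma chain_alg (R : realType) (a u h S0 Q w mus : R) :
  0 < a -> 0 < u -> 0 < w -> 0 < h -> 0 <= S0 -> 0 <= Q ->
  mus^+2 * ((u * h - u)^+2 / ((u * h)^+2 / a + S0 * Q * u^+2 / w))
  = a * mus^+2 * (h - 1)^+2 / (h^+2 + a * S0 * Q / w).
Proof.
move=> ha hu hw hh hS hQ.
have D0 : 0 < h^+2 + a * S0 * Q / w.
  have : 0 < h^+2 by apply: exprn_gt0.
  have : 0 <= a * S0 * Q / w.
    by apply: divr_ge0; [apply: mulr_ge0; [apply: mulr_ge0|]|]; lra.
  lra.
have e : (u * h)^+2 / a + S0 * Q * u^+2 / w = u^+2 / a * (h^+2 + a * S0 * Q / w).
  by field; apply/andP; split; apply/eqP; lra.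
rewrite e.
move: D0; set D := h^+2 + _ => D0.
by field; apply/and3P; split; apply/eqP; lra.
Qed.

Lemma bern (R : realType) (x : R) (m : nat) : 0 <= x <= 1 -> 1 - m%:R * x <= (1 - x)^+m.
Proof.
move=> /andP [x0 x1]; elim: m => [|m IH]; first by rewrite mul0r subr0 expr0.
rewrite exprSr.
have h1 : (1 - m%:R * x) * (1 - x) <= (1 - x)^+m * (1 - x) by apply: ler_wpM2r => //; lra.
have h2 : 0 <= m%:R * x * x by apply: mulr_ge0; [apply: mulr_ge0|] => //.
rewrite -natr1; lra.
Qed.

Lemma core (R : realType) (alpha s nn c p L eta Lam Lamh Q w u P m1 m2 V mus : R) :
  0 < alpha -> 3 < s -> 2 <= nn -> 0 < c -> p = nn * s -> alpha < p -> L = alpha + p ->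
  eta = 2 / L^+2 -> Lam = 1 - 1 / L -> Lamh = 1 - (alpha + p / 4) / L^+2 ->
  Q = 1 + (alpha * eta)^-1 * (1 - Lam^+2) ->
  1 - 2 * nn / L <= w -> 0 < w -> w <= Q * u^+2 -> 0 < u -> u <= P -> u * Lamh <= Lam * P ->
  mus = p * c / L -> mus - m1 = mus * u -> mus * P <= mus - m2 ->
  V <= P^+2 / alpha + eta / (1 - Lamh^+2) -> 0 < V ->
  expR (- (2 / s)) * (alpha / Num.max 6 (1 + 2 * expR s^-1)) * (3 / (32 * s)) ^+ 2 * (c / nn) ^+ 2
  <= (m1 - m2)^+2 / V.
Proof.
move=> ha hs hn hc hp hap hLd heta hLam hLamh hQd hw w0 hkey u0 uP hP2 hmus hM1 hM2 hV V0.
have p6 : 6 < p by rewrite hp; nra.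
have L6 : 6 < L by lra.
have L0 : 0 < L by lra.
have eta0 : 0 < eta by rewrite heta; apply: divr_gt0 => //; apply: exprn_gt0.
have Lam0 : 0 < Lam.
  rewrite hLam; suff : 1 / L < 1 by lra.
  by rewrite ltr_pdivrMr //; lra.
have LamLamh : Lam <= Lamh.
  rewrite hLam hLamh; suff : (alpha + p / 4) / L ^+ 2 <= 1 / L by lra.
  rewrite ler_pdivrMr; last by apply: exprn_gt0.
  have -> : 1 / L * L^+2 = L by rewrite expr2; field; apply/eqP; lra.
  lra.
have Lamh1 : Lamh < 1.
  rewrite hLamh; suff : 0 < (alpha + p / 4) / L ^+ 2 by lra.
  by apply: divr_gt0; [lra| apply: exprn_gt0].
have Lamh56 : 5/6 <= Lamh.
  rewrite hLamh; suff : (alpha + p / 4) / L ^+ 2 <= 1/6 by lra.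
  rewrite ler_pdivrMr; last by apply: exprn_gt0.
  rewrite expr2; nra.
have mus0 : 0 < mus by rewrite hmus; apply: divr_gt0 => //; apply: mulr_gt0; lra.
have hS0 : 0 < 1 - Lamh^+2 by rewrite subr_gt0 expr2; nra.
set S0 := eta / (1 - Lamh^+2) in hV.
have S00 : 0 <= S0 by apply: divr_ge0; lra.
have hdiff : mus * (P - u) <= m1 - m2 by rewrite mulrBr; lra.
have hdiff0 : 0 <= mus * (P - u) by apply: mulr_ge0; lra.
have D0 : 0 < P^+2 / alpha + S0.
  apply: ltr_wpDr => //; apply: divr_gt0 => //; apply: exprn_gt0; lra.
have st1 : mus^+2 * ((P - u)^+2 / (P^+2 / alpha + S0)) <= (m1 - m2)^+2 / V.
  rewrite mulrA -exprMn.
  apply: ler_pM.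
  - exact: sqr_ge0.
  - by rewrite invr_ge0; exact: ltW.
  - by rewrite !expr2; apply: ler_pM.
  - by rewrite lef_pV2 ?posrE.
apply: le_trans st1.
set h := Lamh / Lam.
have h1 : 1 <= h by rewrite /h ler_pdivlMr //; lra.
have uP0 : u <= u * h by rewrite -{1}(mulr1 u); apply: ler_wpM2l; lra.
have P0P : u * h <= P by rewrite /h mulrA ler_pdivrMr //; lra.
have st2 := @mono_ratio R alpha S0 u (u * h) P ha S00 u0 uP0 P0P.
have st2' : mus^+2 * ((u * h - u)^+2 / ((u * h)^+2 / alpha + S0)) <= mus^+2 * ((P - u)^+2 / (P^+2 / alpha + S0)).
  by apply: ler_wpM2l => //; exact: sqr_ge0.
apply: le_trans st2'.
have hSQ : S0 <= S0 * Q * u^+2 / w.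
  rewrite -mulrA -mulrA; rewrite -{1}(mulr1 S0); apply: ler_wpM2l => //.
  by rewrite mulrA ler_pdivlMr // mul1r.
have D1 : 0 < (u * h)^+2 / alpha + S0.
  apply: ltr_wpDr => //; apply: divr_gt0 => //; apply: exprn_gt0; apply: mulr_gt0; lra.
have st3 : mus^+2 * ((u * h - u)^+2 / ((u * h)^+2 / alpha + S0 * Q * u^+2 / w)) <= mus^+2 * ((u * h - u)^+2 / ((u * h)^+2 / alpha + S0)).
  apply: ler_wpM2l; first exact: sqr_ge0.
  apply: ler_wpM2l; first exact: sqr_ge0.
  rewrite lef_pV2 ?posrE //; lra.
apply: le_trans st3.
have Q0 : 0 < Q.
  have : 0 < Q * u^+2 by lra.
  by rewrite pmulr_lgt0 // exprn_gt0.
rewrite (@chain_alg R alpha u h S0 Q w mus ha u0 w0) //; try lra.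
have eh1 : h - 1 = 3 * p / (4 * L * (L - 1)).
  rewrite /h hLam hLamh hLd; field; apply/andP; split; apply/eqP; lra.
have eh : h = 1 + 3 * p / (4 * L * (L - 1)) by rewrite -eh1; ring.
have e1 : 1 - Lamh^+2 = (alpha + p / 4) / L^+2 * (1 + Lamh).
  have -> : 1 - Lamh^+2 = (1 - Lamh) * (1 + Lamh) by ring.
  by rewrite {1}hLamh; ring.
have eC : alpha * S0 * Q / w = (2 * alpha + 2 * L - 1) / ((alpha + p / 4) * (1 + Lamh) * w).
  rewrite /S0 e1 hQd heta hLam; field.
  do ! (apply/andP; split); apply/eqP; lra.
rewrite eh1 eh eC hmus.
by apply: final_ineq => //; lra.
Qed.

Theorem lemmaA5 (R : realType) (alpha beta xh c : R) (n : nat)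
  (halpha : 0 < alpha) (hbeta : 0 < beta) (hxh : 0 < xh) (hc : 0 < c)
  (hn : (2 <= n)%N)
  (hxb : 3 < xh ^+ 2 * beta)
  (hnbig : n%:R > Num.max
      ((2 * alpha * xh ^+ 2 * beta)^-1 - (xh ^+ 2 * beta)^-1)
      (Num.max (alpha / (xh ^+ 2 * beta))
         (alpha / (xh ^+ 2 * beta) * (expR (2 / (xh ^+ 2 * beta)) - 2)
          + (2 * xh ^+ 2 * beta)^-1))) :
  forall r : nat, (1 <= r <= n)%N ->
  let j := (`|(Num.ceil (kdot alpha beta xh n) + 1)%R|%N * n)%N in
  (mu1 alpha beta xh c n j - mu2 alpha beta xh c n r j) ^+ 2
    / sigma2_sq alpha beta xh c n r j
  >= expR (- (2 / (xh ^+ 2 * beta))) * (alpha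
      / Num.max 6 (1 + 2 * expR ((xh ^+ 2 * beta)^-1)))
     * (3 / (32 * xh ^+ 2 * beta)) ^+ 2 * (c / n%:R) ^+ 2.
Proof.
move=> r /andP [r1 rn]; cbv zeta.
have [K hK] : exists K, K = `|(Num.ceil (kdot alpha beta xh n) + 1)%R|%N by eexists.
rewrite -hK.
have e32 : 32 * xh ^+ 2 * beta = 32 * (xh ^+ 2 * beta) by rewrite mulrA.
rewrite e32.
have n2 : (2:R) <= n%:R by rewrite (ler_nat R 2 n).
have n0 : (0:R) < n%:R by lra.
have [s hs] : exists s, s = xh ^+ 2 * beta by eexists.
rewrite -hs in hxb hnbig *.
have s0 : 0 < s by lra.
have hap : alpha < n%:R * s.
  move: hnbig; rewrite !gt_max => /and3P [_ h _].
  by rewrite ltr_pdivrMr // in h.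
have [p hp] : exists p, p = n%:R * s by eexists.
have [L hLd] : exists L, L = alpha + p by eexists.
have hL : L = alpha + n%:R * xh^+2 * beta by rewrite hLd hp hs mulrA.
have p6 : 6 < p by rewrite hp; nra.
have L6 : 6 < L by lra.
have L0 : 0 < L by lra.
have [eta heta_d] : exists eta, eta = sgld_eta alpha beta xh n by eexists.
have heta : eta = 2 / L^+2 by rewrite heta_d /sgld_eta -hL.
have eta0 : 0 < eta by rewrite heta; apply: divr_gt0 => //; apply: exprn_gt0.
rewrite /mu1 /mu2 /sigma2_sq -heta_d.
have [Lam hLam_d] : exists Lam, Lam = 1 - eta / 2 * (alpha + n%:R * beta * xh ^+ 2) by eexists.
have [Lamh hLamh_d] : exists Lamh, Lamh = 1 - eta / 2 * (alpha + n%:R * beta * (xh / 2) ^+ 2) by eexists.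
have hLam : Lam = 1 - 1 / L.
  rewrite hLam_d heta.
  have -> : alpha + n%:R * beta * xh ^+ 2 = L by rewrite hL; ring.
  by field; apply/eqP; lra.
have hLamh : Lamh = 1 - (alpha + p / 4) / L^+2.
  rewrite hLamh_d heta.
  have -> : alpha + n%:R * beta * (xh / 2) ^+ 2 = alpha + p / 4 by rewrite hp hs; field.
  by field; apply/eqP; lra.
have Lam0 : 0 < Lam.
  rewrite hLam; suff : 1 / L < 1 by lra.
  by rewrite ltr_pdivrMr //; lra.
have LamLamh : Lam <= Lamh.
  rewrite hLam hLamh; suff : (alpha + p / 4) / L ^+ 2 <= 1 / L by lra.
  rewrite ler_pdivrMr; last by apply: exprn_gt0.
  have -> : 1 / L * L^+2 = L by rewrite expr2; field; apply/eqP; lra.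
  lra.
have Lamh1 : Lamh < 1.
  rewrite hLamh; suff : 0 < (alpha + p / 4) / L ^+ 2 by lra.
  by apply: divr_gt0; [lra| apply: exprn_gt0].
have Lamh56 : 5/6 <= Lamh.
  rewrite hLamh; suff : (alpha + p / 4) / L ^+ 2 <= 1/6 by lra.
  rewrite ler_pdivrMr; last by apply: exprn_gt0.
  rewrite expr2; nra.
have hr' : (r.-1 < n)%N by rewrite prednK.
have hli : forall i, Lam <= 1 - eta / 2 * (alpha + n%:R * beta * (data_D2 xh c n r i).1 ^+ 2) <= Lamh.
  move=> i; rewrite /data_D2; case: ifP => _ /=; [rewrite -hLamh_d | rewrite -hLam_d]; apply/andP; split; lra.
have hlr : 1 - eta / 2 * (alpha + n%:R * beta * (data_D2 xh c n r r.-1).1 ^+ 2) = Lamh.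
  by rewrite /data_D2 modn_small // eqxx /= -hLamh_d.
have [kd hkd] : exists kd, kd = kdot alpha beta xh n by eexists.
rewrite -hkd in hK.
have [Q hQd] : exists Q, Q = 1 + (alpha * eta)^-1 * (1 - Lam^+2) by eexists.
have hkdot : kd = (2 * n%:R)^-1 * (ln (Q^-1) / ln Lam) - 1.
  rewrite hkd /kdot /logb; cbv zeta.
  have hsl : sgld_lambda alpha beta xh n = Lam.
    by rewrite /sgld_lambda -heta_d hLam_d; ring.
  by rewrite hsl -heta_d -hQd.
have Lam1 : Lam < 1 by lra.
have Q1 : 1 < Q.
  rewrite hQd; suff : 0 < (alpha * eta)^-1 * (1 - Lam^+2) by lra.
  apply: mulr_gt0; first by rewrite invr_gt0; apply: mulr_gt0.
  rewrite subr_gt0 expr2; nra.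
have Q0 : 0 < Q by lra.
have ll0 : ln Lam < 0 by apply: ln_lt0; lra.
have lQ0 : 0 < ln Q by apply: ln_gt0.
have elnQ : ln Q = - ((kd + 1) * (2 * n%:R) * ln Lam).
  rewrite hkdot lnV ?posrE //; field; apply/andP; split; apply/eqP; lra.
have kd1 : 0 < kd + 1.
  have : 0 < - ((kd + 1) * (2 * n%:R) * ln Lam) by rewrite -elnQ.
  have : 0 < (2 * n%:R) * (- ln Lam) by apply: mulr_gt0; lra.
  move=> h1 h2; nra.
have hceil0 : (0 <= Num.ceil kd)%R by rewrite ceil_ge0; lra.
have hKz : (K%:R : R) = (Num.ceil kd)%:~R + 1.
  rewrite hK natr_absz ger0_norm ?intrD //.
  by apply: addr_ge0.
have hceilR : (0:R) <= (Num.ceil kd)%:~R by rewrite ler0z.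
have hK1 : (0 < K)%N by rewrite -(ler1n R) hKz; lra.
have hKlt : (K%:R : R) < kd + 2.
  have := ceilB1_lt kd; rewrite intrB hKz; lra.
have hkey : Lam^+(2 * n) <= Q * (Lam^+(K * n))^+2.
  rewrite -ler_ln ?posrE; last 2 first.
  - by apply: exprn_gt0.
  - by apply: mulr_gt0 => //; apply: exprn_gt0; apply: exprn_gt0.
  rewrite lnM ?posrE; last 2 first.
  - exact: Q0.
  - by apply: exprn_gt0; apply: exprn_gt0.
  rewrite !lnXn //; last by apply: exprn_gt0.
  rewrite -mulrnA -[X in X <= _]mulr_natr -[X in _ <= _ + X]mulr_natr !natrM elnQ.
  have : 0 <= (2 * n%:R) * ((- ln Lam) * (kd + 2 - K%:R)).
    by apply: mulr_ge0; [lra| apply: mulr_ge0; lra].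
  move: (ln Lam) => ll h.
  nra.
have hbern : 1 - 2 * n%:R / L <= Lam^+(2 * n).
  have := @bern R (1 / L) (2 * n) .
  rewrite hLam natrM mulrA mulr1 => -> //.
  apply/andP; split; first by apply: divr_ge0; lra.
  by rewrite ler_pdivrMr //; lra.
have hM1 := @mean_D1 R alpha beta eta c xh L n (K * n) hL (lt0r_neq0 L0).
rewrite -hLam_d in hM1.
have hM2 := @mean_lb R alpha beta eta c xh L n (data_D2 xh c n r) (K * n) hL L0 (ltW halpha) (ltW eta0) (ltW hc).
have hV := @var_ub R alpha beta eta Lamh n (data_D2 xh c n r) (K * n) halpha (ltW eta0).
have hV0 := @var_pos R alpha beta eta n (data_D2 xh c n r) (K * n) halpha eta0.
have hP1 : Lam^+(K * n) <= \prod_(i < K * n) (1 - eta / 2 * (alpha + n%:R * beta * (data_D2 xh c n r i).1 ^+ 2)).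
  apply: (@prod_lb R (fun i => 1 - eta / 2 * (alpha + n%:R * beta * (data_D2 xh c n r i).1 ^+ 2)) Lam (K * n)); first lra.
  by move=> i; have /andP [] := hli i.
have hP2 : Lam^+(K * n) * Lamh <= Lam * \prod_(i < K * n) (1 - eta / 2 * (alpha + n%:R * beta * (data_D2 xh c n r i).1 ^+ 2)).
  apply: (@prod_lb2 R (fun i => 1 - eta / 2 * (alpha + n%:R * beta * (data_D2 xh c n r i).1 ^+ 2)) Lam Lamh r.-1 (K * n)).
  - lra.
  - by move=> i; have /andP [] := hli i.
  - exact: hlr.
  - by apply: (leq_trans hr'); rewrite leq_pmull.
move: hM2 hV hP1 hP2.
move: (\prod_(i < K * n) _) => P hM2 hV hP1 hP2.
apply: (@core R alpha s n%:R c p L eta Lam Lamh Q (Lam^+(2 * n)) (Lam^+(K * n)) P _ _ _ (n%:R * xh^+2 * beta * c / L) halpha hxb n2 hc hp _ hLd heta hLam hLamh hQd hbern _ hkey _ hP1 hP2 _ hM1 _ _ hV0).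
- by rewrite hp.
- by apply: exprn_gt0.
- by apply: exprn_gt0.
- by rewrite hp hs mulrA.
- apply: hM2.
  + by apply: mulr_ge0; lra.
  + by move=> i; rewrite /data_D2; case: ifP => _ //=; rewrite mulrA.
  + move=> i; rewrite /data_D2; case: ifP => _ /=; last lra.
    rewrite !expr2; nra.
  + by move=> i; have /andP [] := hli i; lra.
- apply: hV.
  + apply/andP; split; lra.
  + by move=> i; have /andP [] := hli i => h1 h2; apply/andP; split; lra.
Qed.
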